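(* Let $\vartheta=\vartheta_{B_3}^{\mathcal B,h}$ be a $3$-molecule. Then $\vartheta$ is ambiguous if and only if one of the following holds: (I) $|\mathcal B|=3$ and $h=1$ (i.e. $\vartheta$ is $K_4$); (II) $|\mathcal B|=2$ and $h=2$; (III) $|\mathcal B|=0$ and $h=3$ (i.e. $\vartheta$ is $K_{3,3}$).
   Context: Graphs are finite and undirected. The connectivity of a graph is the largest $k$ such that one must remove at least $k$ vertices to disconnect it (by convention $K_m$, $m\ge3$, has connectivity $m-1$). $k$-molecule: for $k,h\ge1$, $B_k=\{b_1,\dots,b_k\}$ and a set $\mathcal B$ of edges among vertices of $B_k$, $\vartheta_{B_k}^{\mathcal B,h}$ is the graph with vertex set $B_k\cup\{v_1,\dots,v_h\}$ and edge set $\mathcal B\cup\{v_ib_j:1\le i\le h,1\le j\le k\}$, where it is required that $h\ge k-k'$, $k'$ being the connectivity of the subgraph induced by $B_k$. For a graph $G$ and $B\subseteq V_G$ with $|B|=k$, $(G,B)$ is a $k$-premolecule if there is a $k$-molecule $\vartheta_{B_k}^{\mathcal B,h}$ and an isomorphism $G\to\vartheta_{B_k}^{\mathcal B,h}$ mapping $B$ onto $B_k$. An abstract $k$-molecule $G$ is non ambiguous if there is exactly one $B\subseteq V_G$ such that $(G,B)$ is a $k$-premolecule, and ambiguous otherwise; a $k$-molecule is (non) ambiguous if it is so as a graph. *)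

(* Defs.v *)
From mathcomp Require Import all_boot.
Set Implicit Arguments. Unset Strict Implicit. Unset Printing Implicit Defensive.

Definition simple_graph (T : finType) (e : rel T) : Prop :=
  symmetric e /\ irreflexive e.

Definition induced_rel (T : finType) (e : rel T) (A : {set T}) : rel T :=
  [rel x y | [&& e x y, x \in A & y \in A]].

Definition connected_on (T : finType) (e : rel T) (A : {set T}) : bool :=
  [forall x in A, forall y in A, connect (induced_rel e A) x y].

(* Removing S from the induced subgraph on A leaves a disconnected graph or
   a graph with at most one vertex (the K_m convention). *)
Definition separating (T : finType) (e : rel T) (A S : {set T}) : bool :=
  (S \subset A) && ((#|A :\: S| <= 1) || ~~ connected_on e (A :\: S)).

(* S = A is always separating, so #|A| is a valid default. *)
Definition connectivity (T : finType) (e : rel T) (A : {set T}) : nat :=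
  \big[minn/#|A|]_(S in powerset A | separating e A S) #|S|.

Definition edges_rel (k : nat) (bB : {set {set 'I_k}}) : rel 'I_k :=
  [rel i j | (i != j) && ([set i; j] \in bB)].

(* The graph theta_{B_k}^{bB,h} on the vertex type 'I_k + 'I_h:
   inl i = b_(i+1), inr j = v_(j+1). *)
Definition molecule_rel (k h : nat) (bB : {set {set 'I_k}}) : rel ('I_k + 'I_h) :=
  fun x y =>
    match x, y with
    | inl i, inl j => edges_rel bB i j
    | inl _, inr _ => true
    | inr _, inl _ => true
    | inr _, inr _ => false
    end.
Arguments molecule_rel {k} h bB.

Definition is_molecule (k h : nat) (bB : {set {set 'I_k}}) : Prop :=
  [/\ 1 <= k, 1 <= h, (forall E, E \in bB -> #|E| = 2)
    & k - connectivity (edges_rel bB) [set: 'I_k] <= h].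
Arguments is_molecule : clear implicits.

Definition premolecule (T : finType) (e : rel T) (k : nat) (B : {set T}) : Prop :=
  #|B| = k /\
  exists (h : nat) (bB : {set {set 'I_k}}) (f : T -> 'I_k + 'I_h),
    [/\ is_molecule k h bB, bijective f,
        (forall x y, e x y = molecule_rel h bB (f x) (f y))
      & f @: B = [set inl i | i : 'I_k]].

Definition ambiguous (T : finType) (e : rel T) (k : nat) : Prop :=
  ~ (exists! B : {set T}, premolecule e k B).

(* Main.v *)
Require Import Defs.
From mathcomp Require Import all_boot zify.
From Stdlib Require Import Classical.
Set Implicit Arguments. Unset Strict Implicit. Unset Printing Implicit Defensive.

Definition o0 : 'I_3 := @Ordinal 3 0 isT.
Definition o1 : 'I_3 := @Ordinal 3 1 isT.
Definition o2 : 'I_3 := @Ordinal 3 2 isT.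

Lemma ord3 (i : 'I_3) : [\/ i = o0, i = o1 | i = o2].
Proof.
case: i => [[|[|[|n]]] Hi] //.
- by apply: Or31; apply: val_inj.
- by apply: Or32; apply: val_inj.
- by apply: Or33; apply: val_inj.
Qed.

Definition rel3 (a b c : bool) (i j : 'I_3) : bool :=
  match val i, val j with
  | 0, 1 | 1, 0 => a
  | 0, 2 | 2, 0 => b
  | 1, 2 | 2, 1 => c
  | _, _ => false
  end.

Definition pe (E : {set {set 'I_3}}) (i j : 'I_3) := [set i; j] \in E.

Lemma edges3 E : edges_rel E =2 rel3 (pe E o0 o1) (pe E o0 o2) (pe E o1 o2).
Proof.
move=> i j; rewrite /edges_rel /pe /=.
by case: (ord3 i) => ->; case: (ord3 j) => ->; rewrite //= setUC.
Qed.

Lemma test : (o0 == o1) = false.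
Proof. by []. Qed.

Lemma s_neq : [/\ [set o0; o1] != [set o0; o2], [set o0; o1] != [set o1; o2]
   & [set o0; o2] != [set o1; o2]].
Proof.
split; apply/eqP.
- by move/setP/(_ o1); rewrite !inE.
- by move/setP/(_ o0); rewrite !inE.
- by move/setP/(_ o0); rewrite !inE.
Qed.

Lemma in_pairs (E : {set 'I_3}) : #|E| = 2 ->
  [\/ E = [set o0; o1], E = [set o0; o2] | E = [set o1; o2]].
Proof.
move/eqP/cards2P => [x [y [nxy ->]]].
by case: (ord3 x) nxy => ->; case: (ord3 y) => -> //= _;
  rewrite ?(setUC [set o1]) ?(setUC [set o2]);
  [apply: Or31 | apply: Or32 | apply: Or31 | apply: Or33 | apply: Or32 | apply: Or33].
Qed.

Lemma cardbB (bB : {set {set 'I_3}}) : (forall E, E \in bB -> #|E| = 2) ->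
  #|bB| = pe bB o0 o1 + pe bB o0 o2 + pe bB o1 o2.
Proof.
move=> H2; case: s_neq => n1 n2 n3.
rewrite (cardsD1 [set o0; o1]) (cardsD1 [set o0; o2] (bB :\ _)) (cardsD1 [set o1; o2] (bB :\ _ :\ _)).
rewrite !inE (eq_sym [set o0; o2]) (eq_sym [set o1; o2] [set o0; o2]) (eq_sym [set o1; o2] [set o0; o1]) n1 n2 n3 /=.
have -> : bB :\ [set o0; o1] :\ [set o0; o2] :\ [set o1; o2] = set0.
  apply/setP => E; rewrite !inE; apply/negP => /and4P [a b c d].
  by case: (in_pairs (H2 _ d)) a b c => ->; rewrite eqxx.
by rewrite cards0 addn0 /pe addnA.
Qed.

Lemma bigmin_le (I : eqType) (r : seq I) (P : pred I) (F : I -> nat) x0 s :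
  s \in r -> P s -> \big[minn/x0]_(i <- r | P i) F i <= F s.
Proof.
elim: r => //= a r IH; rewrite inE big_cons; case/orP => [/eqP <-|Hs] Ps.
  by rewrite Ps geq_minl.
case: (P a); last exact: IH.
by rewrite geq_min IH // orbT.
Qed.

Lemma conn_le (T : finType) (e : rel T) (A S : {set T}) :
  S \subset A -> separating e A S -> connectivity e A <= #|S|.
Proof.
move=> HS Hsep; rewrite /connectivity; apply: bigmin_le.
  exact: mem_index_enum.
by rewrite powersetE HS.
Qed.

Lemma connA (E : {set {set 'I_3}}) :
  2 <= connectivity (edges_rel E) setT -> forall i j, i != j -> edges_rel E i j.
Proof.
move=> Hc i j nij; apply/negPn/negP => Hn.
have Hsym : edges_rel E j i = edges_rel E i j.
  by rewrite /edges_rel /= eq_sym setUC.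
have Hr : forall u v, induced_rel (edges_rel E) [set i; j] u v = false.
  move=> u v; rewrite /induced_rel /= !inE; apply/negP.
  move=> /and3P [He /orP[/eqP Hu|/eqP Hu] /orP[/eqP Hv|/eqP Hv]]; subst u v.
  - by move: He; rewrite /edges_rel /= eqxx.
  - by rewrite He in Hn.
  - by rewrite Hsym in He; rewrite He in Hn.
  - by move: He; rewrite /edges_rel /= eqxx.
have Hsep : separating (edges_rel E) setT (~: [set i; j]).
  rewrite /separating subsetT /= setTD setCK cards2 nij /=.
  apply/negP => /forallP /(_ i) /implyP; rewrite !inE eqxx => /(_ isT).
  move/forallP/(_ j)/implyP; rewrite !inE eqxx orbT => /(_ isT).
  case/connectP => [[|z p]] /=; first by move=> _ Hij; rewrite Hij eqxx in nij.
  by rewrite Hr.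
have := conn_le (subsetT _) Hsep.
have HC : #|~: [set i; j]| = 1.
  by have := cardsC [set i; j]; rewrite cards2 nij card_ord; case.
by rewrite HC => H; have := leq_trans Hc H.
Qed.

Definition B0 (h : nat) : {set 'I_3 + 'I_h} := [set inl i | i : 'I_3].

Lemma B0_prem h (bB : {set {set 'I_3}}) : is_molecule 3 h bB -> premolecule (molecule_rel h bB) 3 (B0 h).
Proof.
move=> Hm; split.
  by rewrite /B0 card_imset ?cardsT ?card_ord //; move=> a b [].
exists h, bB, id; split => //; first by exists id.
by rewrite imset_id.
Qed.

Lemma prem_facts h (bB : {set {set 'I_3}}) B : premolecule (molecule_rel h bB) 3 B ->
 [/\ #|B| = 3,
  forall x y, x \notin B -> y \notin B -> molecule_rel h bB x y = false,
  forall x y, x \notin B -> y \in B -> molecule_rel h bB x y = true &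
  h = 1 -> forall x y, x \in B -> y \in B -> x != y -> molecule_rel h bB x y].
Proof.
case=> HB [h' [bB' [f [Hmol Hbij Hiso Himg]]]].
have finj := bij_inj Hbij.
have Hin : forall x, x \in B -> exists i, f x = inl i.
  move=> x Hx; have : f x \in f @: B by apply: imset_f.
  by rewrite Himg => /imsetP [i _ ->]; exists i.
have Hout : forall x, x \notin B -> exists j, f x = inr j.
  move=> x Hx; case E: (f x) => [i|j]; last by exists j.
  have : f x \in [set inl i | i : 'I_3] by rewrite E; apply: imset_f.
  rewrite -Himg => /imsetP [y Hy /finj Hxy].
  by rewrite Hxy Hy in Hx.
split => //.
- move=> x y Hx Hy; rewrite Hiso.
  by case: (Hout _ Hx) => i ->; case: (Hout _ Hy) => j ->.
- move=> x y Hx Hy; rewrite Hiso.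
  by case: (Hout _ Hx) => i ->; case: (Hin _ Hy) => j ->.
move=> h1 x y Hx Hy nxy; rewrite Hiso.
have hh : h = h'.
  have := bij_eq_card Hbij; rewrite !card_sum !card_ord; lia.
case: Hmol => _ _ _ Hc.
have Hc2 : 2 <= connectivity (edges_rel bB') [set: 'I_3] by lia.
case: (Hin _ Hx) => i Ei; case: (Hin _ Hy) => j Ej; rewrite Ei Ej /=.
apply: connA => //; apply/eqP => Eij; move/eqP: nxy; apply; apply: finj.
by rewrite Ei Ej Eij.
Qed.

Ltac solve_hyps := repeat match goal with
 | H : is_true true -> _ |- _ => specialize (H isT)
 | H : is_true false -> _ |- _ => clear H
 | H : ?a = ?b -> _ |- _ => first [specialize (H erefl) | clear H]
 end.

Lemma key (m : 'I_3 -> bool) (a b c : bool) (h : nat) :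
  h = ~~ m o0 + ~~ m o1 + ~~ m o2 -> 0 < h ->
  (forall i j, ~~ m i -> ~~ m j -> rel3 a b c i j = false) ->
  (forall i j, ~~ m i -> m j -> rel3 a b c i j = true) ->
  (h = 1 -> forall i j, m i -> m j -> i != j -> rel3 a b c i j) ->
  [\/ a + b + c = 3 /\ h = 1, a + b + c = 2 /\ h = 2 | a + b + c = 0 /\ h = 3].
Proof.
move=> -> hpos H1 H2 H3.
have := H1 o0 o1; have := H1 o0 o2; have := H1 o1 o2.
have := H2 o0 o1; have := H2 o0 o2; have := H2 o1 o2.
have := H2 o1 o0; have := H2 o2 o0; have := H2 o2 o1.
have := fun E => H3 E o0 o1; have := fun E => H3 E o0 o2; have := fun E => H3 E o1 o2.
clear H1 H2 H3; rewrite /rel3 /=.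
case: (m o0) (m o1) (m o2) hpos => [] [] [] hpos; case: a; case: b; case: c => /=;
  move=> *; solve_hyps; try done;
  try first [by apply: Or31 | by apply: Or32 | by apply: Or33].
Qed.


Lemma card3 (A : {set 'I_3}) : #|A| = (o0 \in A) + (o1 \in A) + (o2 \in A).
Proof.
rewrite (cardsD1 o0) (cardsD1 o1 (A :\ _)) (cardsD1 o2 (A :\ _ :\ _)) !inE /=.
have -> : A :\ o0 :\ o1 :\ o2 = set0.
  apply/setP => x; rewrite !inE; apply/negP => /and4P [a b c d].
  by case: (ord3 x) a b c => ->; rewrite eqxx.
by rewrite cards0 addn0 addnA.
Qed.

Lemma forward h (bB : {set {set 'I_3}}) : is_molecule 3 h bB ->
  ambiguous (molecule_rel h bB) 3 ->
  [\/ #|bB| = 3 /\ h = 1, #|bB| = 2 /\ h = 2 | #|bB| = 0 /\ h = 3].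
Proof.
move=> Hm Hamb.
have [B' [HB' Hne]] : exists B', premolecule (molecule_rel h bB) 3 B' /\ B' != B0 h.
  apply: NNPP => Hn; apply: Hamb; exists (B0 h); split; first exact: B0_prem.
  move=> B HB; case: (eqVneq B (B0 h)) => // Hne; exfalso; apply: Hn; by exists B.
case: (prem_facts HB') => HB F1 F2 F3.
have [x0 Hx0 Hx0n] : exists2 x, x \in B' & x \notin B0 h.
  apply/subsetPn; apply/negP => Hs.
  have HB0 : #|B'| = #|B0 h| by case: (B0_prem Hm) => ->.
  move/negP: Hne; apply; apply/eqP/setP; exact: (subset_cardP HB0 Hs).
case: x0 Hx0 Hx0n => [i|v] Hx0 Hx0n.
  by move: Hx0n; rewrite /B0 imset_f.
have Hinr : forall w, inr w \in B'.
  move=> w; apply/negPn/negP => Hw.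
  by have := F2 _ _ Hw Hx0.
pose m i := inl i \in B'.
have HC : ~: B' = inl @: [set i | ~~ m i].
  apply/setP => [[i|w]]; rewrite inE.
    by rewrite mem_imset; [rewrite inE | move=> a b []].
  rewrite Hinr; symmetry; apply/negP => /imsetP [j _] //.
have Hh : h = ~~ m o0 + ~~ m o1 + ~~ m o2.
  have := cardsC B'; rewrite HC card_imset; last by move=> a b [].
  rewrite card_sum !card_ord HB card3 !inE; lia.
case: Hm => _ hpos H2 _.
rewrite (cardbB H2).
apply: (key (m := m)) => //.
- move=> i j Hi Hj; rewrite -edges3.
  by have := F1 (inl i) (inl j) Hi Hj.
- move=> i j Hi Hj; rewrite -edges3.
  by have := F2 (inl i) (inl j) Hi Hj.
- move=> h1 i j Hi Hj nij; rewrite -edges3.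
  by have := F3 h1 (inl i) (inl j) Hi Hj nij.
Qed.

Lemma swap_amb h (bB : {set {set 'I_3}}) (f : 'I_3 + 'I_h -> 'I_3 + 'I_h) i j :
  is_molecule 3 h bB -> cancel f f ->
  (forall x y, molecule_rel h bB x y = molecule_rel h bB (f x) (f y)) ->
  f (inl i) = inr j -> ambiguous (molecule_rel h bB) 3.
Proof.
move=> Hm fK Hiso Hij.
have Hp0 := B0_prem Hm.
have Hp : premolecule (molecule_rel h bB) 3 (f @: B0 h).
  split; first by rewrite card_imset; [case: Hp0 | exact: can_inj fK].
  exists h, bB, f; split => //; first by exists f.
  rewrite -imset_comp (eq_imset _ (fun x => fK x)) imset_id //.
move=> [B [_ Hu]].
have e1 := Hu _ Hp0; have e2 := Hu _ Hp.
have : inr j \in f @: B0 h by rewrite -Hij; apply: imset_f; apply: imset_f.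
by rewrite -e2 e1 => /imsetP [k _].
Qed.

Definition w0 : 'I_2 := @Ordinal 2 0 isT.
Definition w1 : 'I_2 := @Ordinal 2 1 isT.
Lemma ord2' (i : 'I_2) : i = w0 \/ i = w1.
Proof.
case: i => [[|[|n]] Hi] //; [left | right]; exact: val_inj.
Qed.
Lemma ord1' (i : 'I_1) : i = ord0.
Proof. by case: i => [[|n] Hi] //; apply: val_inj. Qed.

Arguments edges_rel : simpl never.

Definition f1 (x : 'I_3 + 'I_1) : 'I_3 + 'I_1 :=
  match x with inl i => if i == o0 then inr ord0 else inl i | inr _ => inl o0 end.
Definition f2 (p q : 'I_3) (x : 'I_3 + 'I_2) : 'I_3 + 'I_2 :=
  match x with
  | inl i => if i == p then inr w0 else if i == q then inr w1 else inl i
  | inr w => if w == w0 then inl p else inl q end.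
Definition f3 (x : 'I_3 + 'I_3) : 'I_3 + 'I_3 :=
  match x with inl i => inr i | inr j => inl j end.

Ltac cases_x x := let i := fresh "i" in destruct x as [i|i];
  [destruct (ord3 i) as [->| -> | ->]
  | first [rewrite (ord1' i) | destruct (ord2' i) as [->| ->] | destruct (ord3 i) as [->| -> | ->]]].

Lemma backward h (bB : {set {set 'I_3}}) : is_molecule 3 h bB ->
  [\/ #|bB| = 3 /\ h = 1, #|bB| = 2 /\ h = 2 | #|bB| = 0 /\ h = 3] ->
  ambiguous (molecule_rel h bB) 3.
Proof.
move=> Hm; have H2 : forall E, E \in bB -> #|E| = 2 by case: Hm.
rewrite (cardbB H2).
have E := edges3 bB.
case: (pe bB o0 o1) E; case: (pe bB o0 o2); case: (pe bB o1 o2) => E //=;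
  case=> [[Hc Hh]|[Hc Hh]|[Hc Hh]]; try discriminate Hc; subst h.
  all: first
  [ solve [apply: (swap_amb (f := f1) (i := o0) (j := ord0) Hm) => //;
      [by move=> x; cases_x x | by move=> x y; cases_x x; cases_x y; rewrite /= ?E]]
  | solve [apply: (swap_amb (f := f2 o0 o2) (i := o0) (j := w0) Hm) => //;
      [by move=> x; cases_x x | by move=> x y; cases_x x; cases_x y; rewrite /= ?E]]
  | solve [apply: (swap_amb (f := f2 o1 o2) (i := o1) (j := w0) Hm) => //;
      [by move=> x; cases_x x | by move=> x y; cases_x x; cases_x y; rewrite /= ?E]]
  | solve [apply: (swap_amb (f := f2 o0 o1) (i := o0) (j := w0) Hm) => //;
      [by move=> x; cases_x x | by move=> x y; cases_x x; cases_x y; rewrite /= ?E]]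
  | solve [apply: (swap_amb (f := f3) (i := o0) (j := o0) Hm) => //;
      [by move=> x; cases_x x | by move=> x y; cases_x x; cases_x y; rewrite /= ?E]] ].
Qed.

Theorem mainTheorem6 (h : nat) (bB : {set {set 'I_3}}) :
  is_molecule 3 h bB ->
  (ambiguous (molecule_rel h bB) 3 <->
     [\/ #|bB| = 3 /\ h = 1, #|bB| = 2 /\ h = 2 | #|bB| = 0 /\ h = 3]).
Proof.
move=> Hm; split; [exact: forward | exact: backward].
Qed.
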